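(* Let $S$ be a complete metric space with distance $d$, and let $\preceq$ be a topological orientation on $S$. Assume that every left-bounded pair in $S$ has a meet, and that $h:S\to\mathbb{R}$ is continuous and a discriminator. Then $(S,\preceq)$ is a cc sponge.
   Context: An orientation on $S$ is a reflexive, antisymmetric binary relation $\preceq$; it is a topological orientation if $\preceq$ is a closed subset of $S\times S$. For $P\subseteq S$: $P$ is left-bounded if some $s\in S$ has $s\preceq p$ for all $p\in P$, right-bounded if some $s$ has $p\preceq s$ for all $p\in P$. The meet of $P$ is an element $x$ with $x\preceq p$ for all $p\in P$ and $y\preceq x$ for every $y$ with $y\preceq p$ for all $p\in P$; the join is defined dually. $(S,\preceq)$ is a cc sponge if every nonempty right-bounded subset has a join. A function $h:S\to\mathbb{R}$ is a discriminator if for every $\varepsilon>0$ there is $\delta>0$ such that for all $x,y\in S$, $x\preceq y$ and $h(y)<h(x)+\delta$ imply $d(x,y)<\varepsilon$. *)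

(* Defs.v *)
From Stdlib Require Import Reals.
Open Scope R_scope.

Section Defs.
Context {S : Type}.

Definition is_metric (d : S -> S -> R) : Prop :=
  (forall x y, 0 <= d x y) /\
  (forall x y, d x y = 0 <-> x = y) /\
  (forall x y, d x y = d y x) /\
  (forall x y z, d x z <= d x y + d y z).

Definition cauchy_seq (d : S -> S -> R) (u : nat -> S) : Prop :=
  forall eps, 0 < eps -> exists N, forall m n, (N <= m)%nat -> (N <= n)%nat ->
    d (u m) (u n) < eps.

Definition converges_to (d : S -> S -> R) (u : nat -> S) (l : S) : Prop :=
  forall eps, 0 < eps -> exists N, forall n, (N <= n)%nat -> d (u n) l < eps.

Definition complete_metric (d : S -> S -> R) : Prop :=
  forall u, cauchy_seq d u -> exists l, converges_to d u l.

Definition orientation (le : S -> S -> Prop) : Prop :=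
  (forall x, le x x) /\ (forall x y, le x y -> le y x -> x = y).

(* le is a closed subset of S x S (product topology of the metric topology):
   its complement is open, i.e. every non-related pair has a neighbourhood
   (product of balls) consisting of non-related pairs. *)
Definition closed_relation (d : S -> S -> R) (le : S -> S -> Prop) : Prop :=
  forall x y, ~ le x y -> exists eps, 0 < eps /\
    forall x' y', d x x' < eps -> d y y' < eps -> ~ le x' y'.

Definition topological_orientation (d : S -> S -> R) (le : S -> S -> Prop) : Prop :=
  orientation le /\ closed_relation d le.

Definition left_bounded (le : S -> S -> Prop) (P : S -> Prop) : Prop :=
  exists s, forall p, P p -> le s p.

Definition right_bounded (le : S -> S -> Prop) (P : S -> Prop) : Prop :=
  exists s, forall p, P p -> le p s.

Definition is_meet (le : S -> S -> Prop) (P : S -> Prop) (x : S) : Prop :=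
  (forall p, P p -> le x p) /\
  (forall y, (forall p, P p -> le y p) -> le y x).

Definition is_join (le : S -> S -> Prop) (P : S -> Prop) (x : S) : Prop :=
  (forall p, P p -> le p x) /\
  (forall y, (forall p, P p -> le p y) -> le x y).

Definition pair_set (x y : S) : S -> Prop := fun p => p = x \/ p = y.

Definition cc_sponge (le : S -> S -> Prop) : Prop :=
  forall P : S -> Prop, (exists p, P p) -> right_bounded le P ->
    exists x, is_join le P x.

Definition continuous_fun (d : S -> S -> R) (h : S -> R) : Prop :=
  forall x eps, 0 < eps -> exists delta, 0 < delta /\
    forall y, d x y < delta -> Rabs (h y - h x) < eps.

Definition discriminator (d : S -> S -> R) (le : S -> S -> Prop) (h : S -> R) : Prop :=
  forall eps, 0 < eps -> exists delta, 0 < delta /\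
    forall x y, le x y -> h y < h x + delta -> d x y < eps.

End Defs.

(* Main.v *)
Require Import Defs.
From Stdlib Require Import Reals Lra Lia Classical ClassicalEpsilon.
Open Scope R_scope.

Fixpoint iter_seq {T : Type} (x0 : T) (g : T -> nat -> T) (n : nat) : T :=
  match n with O => x0 | S k => g (iter_seq x0 g k) (S k) end.

Section Aux.
Variable T : Type.
Variables (d : T -> T -> R) (le : T -> T -> Prop) (h : T -> R).

Lemma heq_aux : is_metric d -> discriminator d le h ->
  forall x y, le x y -> h y <= h x -> x = y.
Proof.
  intros [H0 [H1 _]] Hd x y Hxy Hh. apply H1.
  destruct (Rle_lt_or_eq_dec 0 (d x y) (H0 x y)) as [Hlt|Heq]; [|auto].
  exfalso. destruct (Hd (d x y) Hlt) as [del [Hdel Hx]].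
  assert (d x y < d x y) by (apply Hx; auto; lra). lra.
Qed.

Lemma main_aux :
  is_metric d ->
  complete_metric d ->
  topological_orientation d le ->
  (forall x y : T, left_bounded le (pair_set x y) ->
     exists m, is_meet le (pair_set x y) m) ->
  continuous_fun d h ->
  discriminator d le h ->
  cc_sponge le.
Proof.
  intros Hmet Hc [Hor Hcl] Hmeet Hcont Hdisc P [p0 Hp0] [s Hs].
  pose proof (heq_aux Hmet Hdisc) as heq.
  destruct Hmet as [Hd0 [Hd1 [Hdsym Hdtri]]].
  set (U := fun u => forall p, P p -> le p u).
  assert (HU: forall x y, U x -> U y -> exists m, U m /\ le m x /\ le m y).
  { intros x y Hx Hy. destruct (Hmeet x y) as [m [Hm1 Hm2]].
    exists p0; intros q [->| ->]; auto.
    exists m. split; [|split].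
    intros p Hp. apply Hm2. intros q [->| ->]; auto.
    apply Hm1; left; auto. apply Hm1; right; auto. }
  assert (hmono: forall x y, le x y -> h x <= h y).
  { intros x y Hxy. destruct (Rle_or_lt (h x) (h y)); auto.
    assert (x = y) by (apply heq; auto; lra). subst; lra. }
  destruct (completeness (fun r => exists u, U u /\ r = - h u)) as [L [HL1 HL2]].
  { exists (- h p0). intros r [u [Hu ->]]. apply Ropp_le_contravar. apply hmono. apply Hu; auto. }
  { exists (- h s). exists s. split; auto. }
  set (c := - L).
  assert (Hc1: forall u, U u -> c <= h u).
  { intros u Hu. assert (-h u <= L) by (apply HL1; exists u; auto). unfold c; lra. }
  assert (Hc2: forall e, 0 < e -> exists u, U u /\ h u < c + e).
  { intros e He. apply NNPP; intro Hn.
    assert (L <= L - e).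
    { apply HL2; intros r [u [Hu ->]]. destruct (Rle_or_lt (-h u) (L-e)); auto.
      exfalso; apply Hn; exists u; split; auto; unfold c; lra. }
    lra. }
  assert (Hdl: forall n:nat, {del | 0 < del /\ del <= (/2)^n /\
     forall x y, le x y -> h y < h x + del -> d x y < (/2)^n}).
  { intro n. apply constructive_indefinite_description.
    destruct (Hdisc ((/2)^n)) as [del [Hdel Hx]]. apply pow_lt; lra.
    exists (Rmin del ((/2)^n)). split;[|split].
    apply Rmin_glb_lt; auto; apply pow_lt; lra. apply Rmin_r.
    intros x y Hxy Hh. apply Hx; auto. pose proof (Rmin_l del ((/2)^n)). lra. }
  set (dl := fun n => proj1_sig (Hdl n)).
  assert (Hdlp : forall n, 0 < dl n /\ dl n <= (/2)^n /\
     forall x y, le x y -> h y < h x + dl n -> d x y < (/2)^n).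
  { intro n. unfold dl. destruct (Hdl n); simpl; auto. }
  assert (Hg: forall (x:T) (n:nat), {w | U x -> U w /\ le w x /\ h w < c + dl n}).
  { intros x n. apply constructive_indefinite_description.
    destruct (classic (U x)) as [Ux|nUx].
    - destruct (Hc2 (dl n)) as [u [Hu Hhu]]. apply Hdlp.
      destruct (HU x u Ux Hu) as [m [Um [Hmx Hmu]]].
      exists m; intros _; split; auto; split; auto.
      pose proof (hmono _ _ Hmu); lra.
    - exists x; intro; contradiction. }
  destruct (Hc2 (dl 0%nat)) as [u0 [Hu0 Hhu0]]. apply Hdlp.
  set (v := iter_seq u0 (fun x n => proj1_sig (Hg x n))).
  assert (HvS : forall n, v (S n) = proj1_sig (Hg (v n) (S n))) by reflexivity.
  assert (Hv: forall n, U (v n) /\ h (v n) < c + dl n).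
  { induction n. simpl. auto. rewrite HvS.
    destruct (Hg (v n) (S n)) as [w Hw]; simpl.
    destruct IHn as [H1 H2]; destruct (Hw H1) as [? [? ?]]; auto. }
  assert (Hstep: forall n, le (v (S n)) (v n)).
  { intro n. rewrite HvS. destruct (Hg (v n) (S n)) as [w Hw]; simpl.
    apply (Hw (proj1 (Hv n))). }
  assert (Hdist: forall n, d (v n) (v (S n)) < (/2)^n).
  { intro n. rewrite Hdsym. apply (proj2 (proj2 (Hdlp n))). apply Hstep.
    pose proof (Hc1 _ (proj1 (Hv (S n)))). pose proof (proj2 (Hv n)). lra. }
  assert (Hsum: forall k n, d (v n) (v (n+k)%nat) <= 2*(/2)^n - 2*(/2)^(n+k)).
  { induction k; intro n.
    - rewrite Nat.add_0_r. assert (d (v n) (v n) = 0) by (apply Hd1; auto). lra.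
    - rewrite Nat.add_succ_r.
      pose proof (Hdtri (v n) (v (n+k)%nat) (v (S (n+k)))).
      pose proof (IHk n). pose proof (Hdist (n+k)%nat).
      simpl pow. lra. }
  assert (Hsmall: forall e, 0 < e -> exists N, forall n, (n >= N)%nat -> (/2)^n < e).
  { intros e He. destruct (pow_lt_1_zero (/2)) with (y := e) as [N HN]; auto.
    rewrite Rabs_right; lra.
    exists N. intros n Hn. specialize (HN n Hn). rewrite Rabs_right in HN; auto.
    apply Rle_ge, pow_le; lra. }
  assert (Hcauchy: cauchy_seq d v).
  { intros e He. destruct (Hsmall (e/2)) as [N HN]. lra.
    exists N.
    assert (Hw: forall m n, (N <= n)%nat -> (n <= m)%nat -> d (v n) (v m) < e).
    { intros m n Hn Hnm. replace m with (n + (m - n))%nat by lia.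
      pose proof (Hsum (m-n)%nat n). pose proof (HN n Hn).
      assert (0 <= (/2)^(n + (m-n))) by (apply pow_le; lra). lra. }
    intros m n Hm Hn. destruct (Nat.le_ge_cases m n).
    apply Hw; auto. rewrite Hdsym. apply Hw; auto. }
  destruct (Hc v Hcauchy) as [l Hl].
  assert (Ul: U l).
  { intros p Hp. apply NNPP; intro Hn. destruct (Hcl p l Hn) as [e [He Hx]].
    destruct (Hl e He) as [N HN].
    apply (Hx p (v N)).
    assert (d p p = 0) by (apply Hd1; auto). lra.
    rewrite Hdsym. apply HN; auto.
    apply (proj1 (Hv N)); auto. }
  assert (Hlc: h l <= c).
  { apply Rnot_lt_le; intro Hlt.
    destruct (Hcont l ((h l - c)/2)) as [del [Hdel Hx]]. lra.
    destruct (Hl del Hdel) as [N1 HN1].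
    destruct (Hsmall ((h l - c)/2)) as [N2 HN2]. lra.
    set (n := Nat.max N1 N2).
    assert (d l (v n) < del) by (rewrite Hdsym; apply HN1; lia).
    pose proof (Rabs_def2 _ _ (Hx _ H)).
    pose proof (HN2 n ltac:(lia)). pose proof (Hv n). pose proof (Hdlp n). lra. }
  exists l. split. exact Ul.
  intros y Hy. destruct (HU l y Ul Hy) as [m [Um [Hml Hmy]]].
  assert (m = l) by (apply heq; auto; pose proof (Hc1 m Um); lra). subst; auto.
Qed.

End Aux.

Theorem mainTheorem3 (S : Type) (d : S -> S -> R) (le : S -> S -> Prop) (h : S -> R) :
  is_metric d ->
  complete_metric d ->
  topological_orientation d le ->
  (forall x y : S, left_bounded le (pair_set x y) ->
     exists m, is_meet le (pair_set x y) m) ->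
  continuous_fun d h ->
  discriminator d le h ->
  cc_sponge le.
Proof.
  apply main_aux.
Qed.
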